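(* Let $k=4l+3$ for a nonnegative integer $l$, and let $G$ be a $k$-uniform tight cycle (an $s$-cycle with $s=k-1$) with $n$ vertices. Then the maximum degree of $G$ is $\Delta=k$. If $n$ is even, then $\lambda(\mathcal{L})\ge\Delta+1=k+1$.
   Context: A $k$-uniform $s$-cycle with $m$ edges has vertex set $\mathbb{Z}_n$, $n=m(k-s)$ (vertex $n+i$ identified with $i$), and edges $e_j=\{j(k-s)+1,\ldots,j(k-s)+k\}$, $j=0,\ldots,m-1$; it is assumed that $n\ge 2k-s$ (for $s=k-1$: $n=m\ge k+1$). The degree $d_i$ of a vertex is the number of edges containing it. A Laplacian H-eigenvalue of $G$ is a real $\lambda$ for which there exists $\mathbf{x}\in\mathbb{R}^n\setminus\{0\}$ with $\lambda x_i^{k-1}=d_ix_i^{k-1}-\sum_{e\ni i}\prod_{j\in e\setminus\{i\}}x_j$ for all $i$ (equivalently, an H-eigenvalue of the Laplacian tensor $\mathcal{L}=\mathcal{D}-\mathcal{A}$, with $\mathcal{A}$ the adjacency tensor having entries $1/(k-1)!$ on edges and $\mathcal{D}$ the diagonal degree tensor); $\lambda(\mathcal{L})$ is the largest Laplacian H-eigenvalue. *)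

(* Defs.v *)
From mathcomp Require Import all_boot all_order all_algebra.
From mathcomp Require Import reals.
Set Implicit Arguments. Unset Strict Implicit. Unset Printing Implicit Defensive.
Import Order.TTheory GRing.Theory Num.Theory.
Local Open Scope ring_scope.

(* k-uniform tight cycle (s = k-1) on vertex set Z_n = {0,..,n-1}:
   edge e_j = {j+1, ..., j+k} (indices mod n), j = 0..n-1. *)
Definition tc_edge (n k : nat) (j : 'I_n) : {set 'I_n} :=
  [set i : 'I_n | [exists t : 'I_k, val i == ((val j + t.+1) %% n)%N]].

Definition tc_deg (n k : nat) (i : 'I_n) : nat :=
  #|[set j : 'I_n | i \in tc_edge k j]|.

Definition tc_maxdeg (n k : nat) : nat := (\max_(i : 'I_n) tc_deg k i)%N.

Definition tc_lap_Heig (R : realType) (n k : nat) (lam : R) : Prop :=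
  exists x : 'I_n -> R, (exists i, x i != 0) /\
    forall i : 'I_n,
      lam * x i ^+ k.-1 =
        (tc_deg k i)%:R * x i ^+ k.-1
        - \sum_(j : 'I_n | i \in tc_edge k j) \prod_(v in tc_edge k j :\ i) x v.

Definition tc_lap_largest (R : realType) (n k : nat) (mu : R) : Prop :=
  tc_lap_Heig n k mu /\ forall lam, tc_lap_Heig n k lam -> lam <= mu.

(* Main.v *)
Require Import Defs.
From mathcomp Require Import all_boot all_order all_algebra.
From mathcomp Require Import reals zify ring lra.
Import Order.TTheory GRing.Theory Num.Theory.
Local Open Scope ring_scope.
Set Implicit Arguments. Unset Strict Implicit.

Lemma mod2 n a : (0 < n)%N -> (a < 2 * n)%N ->
  (a %% n = if (a < n) then a else (a - n))%N.
Proof.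
move=> hn ha; case: ltnP => h; first by rewrite modn_small.
have -> : a = ((a - n) + n)%N by lia.
rewrite modnDr modn_small //; lia.
Qed.

Lemma vE m (x : 'I_m) : val x = nat_of_ord x. Proof. by []. Qed.

Definition gq n k (hn : (0 < n)%N) (i : 'I_n) (t : 'I_k) : 'I_n :=
  Ordinal (ltn_pmod (i + n - t.+1) hn).
Definition hq n k (hn : (0 < n)%N) (j : 'I_n) (t : 'I_k) : 'I_n :=
  Ordinal (ltn_pmod (j + t.+1) hn).

Lemma S_eq n k (hn : (0 < n)%N) (i : 'I_n) : (k < n)%N ->
  [set j | i \in tc_edge k j] = [set gq hn i t | t in 'I_k].
Proof.
move=> hk; apply/setP => j; rewrite !inE; apply/existsP/imsetP.
- case=> t /eqP H; exists t => //; apply: val_inj => /=; rewrite !vE in H *.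
  have := ltn_ord i; have := ltn_ord j; have := ltn_ord t => ? ? ?.
  move: H; rewrite !mod2 //; try lia.
  by case: (ltnP (j + t.+1) n) => ?; case: (ltnP (i + n - t.+1) n) => ? ?; lia.
- case=> t _ ->; exists t; apply/eqP => /=; rewrite ?vE.
  have := ltn_ord i; have := ltn_ord t => ? ?.
  rewrite (@mod2 n (i + n - t.+1)) //; last lia.
  by case: ltnP => ?; rewrite mod2 //; try lia; case: ltnP => ?; lia.
Qed.

Lemma gq_inj n k (hn : (0 < n)%N) (i : 'I_n) : (k < n)%N -> injective (gq hn i (k:=k)).
Proof.
move=> hk t1 t2 /(congr1 val) /=.
have := ltn_ord i; have := ltn_ord t1; have := ltn_ord t2 => ? ? ?.
rewrite !mod2 //; try lia.
by case: (ltnP (i + n - t1.+1) n) => ?; case: (ltnP (i + n - t2.+1) n) => ? ?; apply: val_inj => /=; lia.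
Qed.

Lemma E_eq n k (hn : (0 < n)%N) (j : 'I_n) :
  tc_edge k j = [set hq hn j t | t in 'I_k].
Proof.
apply/setP => i; rewrite !inE; apply/existsP/imsetP.
- by case=> t /eqP H; exists t => //; apply: val_inj.
- by case=> t _ ->; exists t.
Qed.

Lemma hq_inj n k (hn : (0 < n)%N) (j : 'I_n) : (k < n)%N -> injective (hq hn j (k:=k)).
Proof.
move=> hk t1 t2 /(congr1 val) /=.
have := ltn_ord j; have := ltn_ord t1; have := ltn_ord t2 => ? ? ?.
rewrite !mod2 //; try lia.
by case: (ltnP (j + t1.+1) n) => ?; case: (ltnP (j + t2.+1) n) => ? ?; apply: val_inj => /=; lia.
Qed.

Lemma deg_eq n k (i : 'I_n) : (k < n)%N -> tc_deg k i = k.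
Proof.
move=> hk; have hn : (0 < n)%N by lia.
by rewrite /tc_deg (S_eq hn) // card_imset ?card_ord //; apply: gq_inj.
Qed.

Lemma sg_mod (R : realType) n a : ~~ odd n -> (-1 : R) ^+ (a %% n) = (-1) ^+ a.
Proof.
move=> hn; rewrite -(@signr_odd R (a %% n)) -(@signr_odd R a); congr (_ ^+ _);
by rewrite {2}(divn_eq a n) oddD oddM (negbTE hn) andbF.
Qed.

Lemma ss (R : realType) m : (-1 : R) ^+ m * (-1) ^+ m = 1.
Proof. by rewrite -exprD -signr_odd oddD addbb. Qed.

Lemma oddsum j l : odd (\sum_(t < 4 * l + 3) (j + t.+1))%N = odd j.
Proof.
elim: l => [|l IH].
  rewrite !big_ord_recr big_ord0 /=.
  have -> : (0 + (j + 1) + (j + 2) + (j + 3) = j + (j + 3).*2)%N by rewrite -muln2; lia.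
  by rewrite oddD odd_double addbF.
have -> : (4 * l.+1 + 3 = (4 * l + 3).+4)%N by lia.
rewrite !big_ord_recr /=.
set m := (4 * l + 3)%N.
set S := (\sum_(i < m) _)%N.
have -> : (S + (j + m.+1) + (j + m.+2) + (j + m.+3) + (j + m.+4) = S + (2 * j + 2 * m + 5).*2)%N
  by rewrite -muln2; lia.
by rewrite oddD odd_double addbF IH.
Qed.

Lemma sumsg (R : realType) m :
  \sum_(t < m) (-1 : R) ^+ t.+1 = if odd m then -1 else 0.
Proof.
elim: m => [|m IH]; first by rewrite big_ord0.
rewrite big_ord_recr /= IH exprS -signr_odd.
by case: (odd m) => /=; rewrite ?expr0 ?expr1; lra.
Qed.

Lemma term_eq (R : realType) n l (hn : (0 < n)%N) (hev : ~~ odd n) (i : 'I_n)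
  (t : 'I_(4 * l + 3)) : (4 * l + 3 < n)%N ->
  \prod_(v in tc_edge (4 * l + 3) (gq hn i t) :\ i) (-1 : R) ^+ v = (-1) ^+ t.+1.
Proof.
move=> hk; set k := (4 * l + 3)%N; set J := gq hn i t.
have Hi : i \in tc_edge k J.
  have : J \in [set j | i \in tc_edge k j] by rewrite S_eq //; apply: imset_f.
  by rewrite inE.
have hE : \prod_(v in tc_edge k J) (-1 : R) ^+ v = (-1) ^+ J.
  rewrite E_eq big_imset /=; last by move=> a b _ _; apply: hq_inj.
  under eq_bigr => s _ do rewrite /= sg_mod //.
  rewrite (eq_bigl xpredT) // prodrXr -[LHS]signr_odd /k oddsum signr_odd //.
have hD : \prod_(v in tc_edge k J) (-1:R) ^+ v =
    (-1) ^+ i * \prod_(v in tc_edge k J :\ i) (-1) ^+ v by rewrite (big_setD1 i Hi).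
rewrite hE in hD.
have -> : \prod_(v in tc_edge k J :\ i) (-1 : R) ^+ v = (-1) ^+ i * (-1) ^+ J.
  by rewrite hD mulrA ss mul1r.
rewrite /J /= sg_mod // -exprD -signr_odd -[RHS]signr_odd.
have ht := ltn_ord t; have hi := ltn_ord i.
have e : (i + (i + n - t.+1) + t.+1 = i.*2 + n)%N by rewrite -muln2; lia.
have := congr1 odd e; rewrite oddD [in RHS]oddD odd_double (negbTE hev).
by case: (odd _) (odd _) => [] [].
Qed.

Theorem proposition8p1 (R : realType) (l n : nat) :
  let k := (4 * l + 3)%N in
  (k + 1 <= n)%N ->
  tc_maxdeg n k = k /\
  (~~ odd n ->
     (exists lam : R, tc_lap_Heig n k lam /\ (k + 1)%:R <= lam) /\
     (forall mu : R, tc_lap_largest n k mu -> (k + 1)%:R <= mu)).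
Proof.
move=> k hkn.
have hk : (k < n)%N by rewrite /k; lia.
have hn : (0 < n)%N by rewrite /k in hk; lia.
split.
  apply/eqP; rewrite eqn_leq; apply/andP; split.
    by apply/bigmax_leqP => i _; rewrite deg_eq.
  by rewrite -{1}(deg_eq (Ordinal hn) hk); apply: leq_bigmax.
move=> hev.
have H : tc_lap_Heig n k ((k + 1)%:R : R).
  exists (fun v : 'I_n => (-1 : R) ^+ v); split.
    by exists (Ordinal hn) => /=; rewrite expr0 oner_neq0.
  move=> i.
  have -> : ((-1 : R) ^+ i) ^+ k.-1 = 1.
    have -> : k.-1 = (2 * l + 1).*2 by rewrite /k -muln2; lia.
    by rewrite -exprM -signr_odd oddM odd_double andbF.
  rewrite deg_eq //.
  rewrite (eq_bigl (fun j => j \in [set j | i \in tc_edge k j])); last by move=> j; rewrite inE.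
  rewrite S_eq // big_imset /=; last by move=> a b _ _; apply: gq_inj.
  under eq_bigr => t _ do rewrite term_eq //.
  rewrite (eq_bigl xpredT) // sumsg /k oddD oddM /= natrD; ring.
split; first by exists (k + 1)%:R.
by move=> mu [_ Hmu]; apply: Hmu.
Qed.
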